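(* Let $\zeta\in\overline{\mathbb D}$ and $f\in\mathcal D_\zeta$, $f(z)=\sum_{k=0}^\infty a_kz^k$. Then $\sum_{k=0}^\infty a_k\zeta^k$ converges, and, setting $$f_n(z):=\sum_{k=0}^{n-1}a_kz^k+\Bigl(\sum_{k=n}^\infty a_k\zeta^{k-n}\Bigr)z^n,$$ we have $\mathcal D_\zeta(f-f_n)\to0$ as $n\to\infty$.
   Context: $\mathbb D$ is the open unit disk, $\mathrm{Hol}(\mathbb D)$ the holomorphic functions on $\mathbb D$, and $H^2$ the Hardy space with $\|\sum b_kz^k\|_{H^2}^2=\sum|b_k|^2$. For $\zeta\in\overline{\mathbb D}$, $\mathcal D_\zeta$ is the set of $f\in\mathrm{Hol}(\mathbb D)$ of the form $f(z)=a+(z-\zeta)g(z)$ with $g\in H^2$, $a\in\mathbb C$; for such $f$ set $\mathcal D_\zeta(f):=\|g\|_{H^2}^2$, and set $\mathcal D_\zeta(f):=\infty$ if $f\notin\mathcal D_\zeta$. *)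

(* Defs.v *)
From HB Require Import structures.
From mathcomp Require Import all_boot all_order all_algebra.
From mathcomp Require Import all_classical all_reals all_analysis.
From mathcomp Require Import complex.
Set Implicit Arguments.
Unset Strict Implicit.
Unset Printing Implicit Defensive.
Import Order.TTheory GRing.Theory Num.Theory.
Import numFieldNormedType.Exports.
Local Open Scope classical_set_scope.
Local Open Scope ring_scope.

Section Defs.
Variable R : realType.
Local Notation C := (R[i])^o.

Definition sqmod (z : C) : R := (complex.Re z) ^+ 2 + (complex.Im z) ^+ 2.

Definition H2coef (b : nat -> C) : Prop :=
  (\sum_(0 <= k <oo) ((sqmod (b k))%:E) < +oo)%E.

(** f(z) = a + (z - zeta) g(z) on the open unit disk, where
    g(z) = sum_k b_k z^k with (b_k) square-summable (i.e. g in H^2). *)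
Definition Drep (zeta : C) (f : C -> C) (a : C) (b : nat -> C) : Prop :=
  H2coef b /\
  forall z : C, `|z| < 1 ->
    exists w : C, series (fun k => b k * z ^+ k) @ \oo --> w /\
                  f z = a + (z - zeta) * w.

Definition in_Dzeta (zeta : C) (f : C -> C) : Prop :=
  exists a b, Drep zeta f a b.

(** The representation is unique when |zeta| <= 1, so the infimum below is
    exactly ||g||^2; the infimum of the empty set is +oo. *)
Definition Dzeta (zeta : C) (f : C -> C) : \bar R :=
  ereal_inf [set (\sum_(0 <= k <oo) ((sqmod (b k))%:E))%E
            | b in [set b | exists a, Drep zeta f a b]].

Definition tailsum (a : nat -> C) (zeta : C) (n : nat) : C :=
  lim (series (fun j => a (n + j)%N * zeta ^+ j) @ \oo).

Definition fn (a : nat -> C) (zeta : C) (n : nat) (z : C) : C :=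
  \sum_(k < n) a k * z ^+ k + tailsum a zeta n * z ^+ n.

End Defs.

(* Main.v *)
Require Import Defs.
From HB Require Import structures.
From mathcomp Require Import all_boot all_order all_algebra.
From mathcomp Require Import all_classical all_reals all_analysis.
From mathcomp Require Import complex.
From mathcomp Require Import ring lra.
Import Order.TTheory GRing.Theory Num.Theory.
Import numFieldNormedType.Exports.
Local Open Scope classical_set_scope.
Local Open Scope ring_scope.
Section S.
Context {R : realType}.
Local Notation C := (R[i])^o.

Lemma geo {s : C} : 0 <= s -> s <= 2^-1 -> forall a n,
  \sum_(a <= i < a + n) s^+i <= 2 * s^+a - 2 * s^+(a+n).
Proof.
move=> s0 s2 a; elim=> [|n IH]; first by rewrite addn0 big_geq // subrr.
rewrite addnS big_nat_recr /=; last by rewrite leq_addr.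
apply: le_trans (lerD IH (lexx _)) _.
rewrite -addrA lerD2l exprS.
have h : 2 * (s * s ^+ (a + n)) <= s ^+ (a+n).
  rewrite mulrA -[X in _ <= X]mul1r ler_wpM2r ?exprn_ge0 //.
  by rewrite -(@ler_pM2r _ (2^-1)) ?invr_gt0 ?ltr0n // mul1r mulrAC divff ?mul1r // pnatr_eq0.
have -> : - (2 * s ^+ (a + n)) + s ^+ (a + n) = - s ^+ (a + n) by ring.
by rewrite lerN2.
Qed.

Lemma half_lt1 : (2^-1 : C) < 1.
Proof. by rewrite invf_lt1 ?ltr0n // ltr1n. Qed.

Lemma half_ge0 : 0 <= (2^-1 : C).
Proof. by rewrite invr_ge0 ler0n. Qed.

Lemma norm_half : `|2^-1 : C| = 2^-1.
Proof. by rewrite ger0_norm // half_ge0. Qed.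

Lemma uniq0 (d : nat -> C) :
  (forall z : C, `|z| < 1 -> series (fun k => d k * z ^+ k) @ \oo --> 0) ->
  forall k, d k = 0.
Proof.
move=> H.
have [K K0 HK] : exists2 K : C, 0 < K & forall k, `|d k * 2^-1 ^+ k| < K.
  have h : cvgn (series (fun k => d k * 2^-1 ^+ k)).
    by apply/cvg_ex; exists 0; apply: H; rewrite ger0_norm ?half_lt1 // ?invr_ge0 ?ler0n.
  have [M M0 HM] := ex_strict_bound_gt0 (cvg_seq_bounded (cvgP _ (cvg_series_cvg_0 h))).
  by exists M => // k; exact: (HM k).
elim/ltn_ind => m IHm.
apply/eqP/negPn/negP => dm0.
set x := `|d m|.
have x0 : 0 < x by rewrite normr_gt0.
have xK : x * 2^-1 ^+ m < K.
  by have := HK m; rewrite normrM normrX norm_half.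
set s := x / (8 * K * 2 ^+ m).
have s0 : 0 < s by rewrite divr_gt0 // !mulr_gt0 // exprn_gt0.
have xK' : x < K * 2 ^+ m.
  by move: xK; rewrite exprVn ltr_pdivrMr // exprn_gt0.
have KM0 : 8 * K * 2 ^+ m != 0 by rewrite gt_eqF // !mulr_gt0 // exprn_gt0.
have hs : s * (8 * K * 2 ^+ m) = x by rewrite /s divfK.
have s2 : s <= 2^-1.
  rewrite /s ler_pdivrMr ?mulr_gt0 ?exprn_gt0 //; apply: ltW; apply: lt_le_trans xK' _.
  rewrite (_ : 2^-1 * (8 * K * 2 ^+ m) = 4 * (K * 2 ^+ m)); last by field.
  by rewrite ler_peMl ?mulr_ge0 ?exprn_ge0 ?ltW // ltr1n.
clearbody s.
set t := s / 2.
have t0 : 0 < t by rewrite divr_gt0.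
have t1 : `|t| < 1.
  rewrite ger0_norm ?ltW //; apply: le_lt_trans half_lt1; apply: le_trans s2.
  by rewrite ler_pdivrMr // ler_peMr ?ltW // ltr1n.
have := H t t1.
move/cvgr0Pnorm_lt.
set y := x * t ^+ m.
have y0 : 0 < y by rewrite mulr_gt0 // exprn_gt0.
move=> /(_ (y / 4)); rewrite divr_gt0 // => /(_ isT) [N0 _ HN0].
set N := maxn N0 m.+1.
have := HN0 N (leq_maxl _ _).
have mN : (m.+1 <= N)%N by rewrite leq_maxr.
rewrite /series /= (big_cat_nat (leq0n m.+1) mN) /= big_nat_recr //=.
rewrite big_mkord big1 => [|i _]; last by rewrite IHm ?mul0r.
rewrite add0r.
set Q := \sum_(m.+1 <= k < N) _.
have HQ : `|Q| <= 2 * K * s ^+ m.+1.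
  apply: le_trans (ler_norm_sum _ _ _) _.
  have Hk : forall k, `|d k * t ^+ k| <= K * s ^+ k.
    move=> k; rewrite normrM normrX (ger0_norm (ltW t0)) /t expr_div_n.
    have := ltW (HK k); rewrite normrM normrX norm_half exprVn.
    rewrite mulrA; move/(ler_wpM2r (exprn_ge0 k (ltW s0))).
    by rewrite mulrAC.
  apply: le_trans (ler_sum_nat (fun k _ => Hk k)) _.
  rewrite -mulr_sumr [2 * K]mulrC -mulrA ler_wpM2l ?(ltW K0) //.
  rewrite -(subnKC mN); apply: le_trans (geo (ltW s0) s2 m.+1 (N - m.+1)) _.
  by rewrite gerDl oppr_le0 mulr_ge0 ?ler0n ?exprn_ge0 ?ltW.
have Hy : 2 * K * s ^+ m.+1 = y / 4.
  by rewrite /y /t -hs exprS expr_div_n; field; rewrite expf_neq0 // pnatr_eq0.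
have Ey : y = `|d m * t ^+ m| by rewrite normrM normrX (ger0_norm (ltW t0)).
move=> HP.
have : y < y / 4 + y / 4.
  rewrite {1}Ey -{2}Hy.
  have -> : d m * t ^+ m = (d m * t ^+ m + Q) - Q by rewrite addrK.
  by apply: le_lt_trans (ler_normB _ _) _; exact: ltr_leD HP HQ.
rewrite -subr_lt0 (_ : y - (y / 4 + y / 4) = y / 2); last by field.
by rewrite (lt_gtF (_ : 0 < y / 2)) // divr_gt0.
Qed.

Lemma sqmodE (z : C) : ((sqmod z)%:C)%C = `|z| ^+ 2.
Proof. by rewrite /sqmod add_Re2_Im2. Qed.

Lemma sqmod_ge0 (z : C) : (0 <= sqmod z)%R.
Proof. by rewrite /sqmod addr_ge0 // sqr_ge0. Qed.

Lemma tail_cvg0 {b : nat -> C} : H2coef b ->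
  (\sum_(N <= k <oo) (sqmod (b k))%:E)%E @[N --> \oo] --> 0%E.
Proof.
move=> Hb; apply: (@nneseries_tail_cvg R (fun k => (sqmod (b k))%:E) xpredT) => //.
by move=> k _; rewrite lee_fin sqmod_ge0.
Qed.

Lemma H2_to0 {b : nat -> C} : H2coef b -> b @ \oo --> 0.
Proof.
move=> Hb; have Ht := tail_cvg0 Hb.
apply/cvgr0Pnorm_lt => e e0.
have er : e \is Num.real by rewrite gtr0_real.
have e0' : (0 < complex.Re e)%R by move: e0; rewrite ltcE => /andP[].
have := Ht; move/fine_cvgP => [HF /cvgr0Pnorm_lt Hf].
have ee0 : (0 < complex.Re e ^+ 2)%R by rewrite exprn_gt0.
apply: filterS2 HF (Hf _ ee0) => N HNf HN.
have h1 : (sqmod (b N) < complex.Re e ^+ 2)%R.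
  apply: le_lt_trans HN; apply: le_trans (ler_norm _).
  rewrite -lee_fin /= (fineK HNf).
  have := @nneseries_lim_ge R (fun k => (sqmod (b k))%:E) xpredT N N.+1.
  by rewrite big_nat1; apply => k _ _; rewrite lee_fin sqmod_ge0.
rewrite -(ltr_sqr (normr_ge0 _)) ?nnegrE ?ltW // -sqmodE -(RRe_real er).
by rewrite -rmorphXn ltcR.
Qed.

Lemma mul_bnd0 (u v : nat -> C) : u @ \oo --> 0 -> (forall n, `|v n| <= 1) ->
  (fun n => u n * v n) @ \oo --> 0.
Proof.
move=> /cvgr0Pnorm_lt Hu Hv; apply/cvgr0Pnorm_lt => e e0.
apply: filterS (Hu e e0) => n hn; rewrite normrM; apply: le_lt_trans hn.
by rewrite ler_piMr.
Qed.


Definition bb (c : C) (b : nat -> C) k : C := if k is k'.+1 then b k' else c.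
Definition ap (c zeta : C) (b : nat -> C) k : C := bb c b k - zeta * b k.

Lemma P1 (c zeta z : C) (b : nat -> C) n :
  \sum_(k < n) ap c zeta b k * z ^+ k + bb c b n * z ^+ n =
  c + (z - zeta) * \sum_(k < n) b k * z ^+ k.
Proof.
elim: n => [|n IH]; first by rewrite !big_ord0 expr0 mulr1 add0r mulr0 addr0.
rewrite !big_ord_recr /= mulrDr addrA -IH /ap /= exprS; ring.
Qed.

Lemma P2 (c zeta : C) (b : nat -> C) n M :
  \sum_(j < M.+1) ap c zeta b (n + j) * zeta ^+ j =
  bb c b n - b (M + n)%N * zeta ^+ M.+1.
Proof.
elim: M => [|M IH].
  by rewrite big_ord_recr big_ord0 /= add0r addn0 /ap expr0 mulr1 expr1; ring.
rewrite big_ord_recr /= IH /ap addnS /= [(n + M)%N]addnC addSn !exprS; ring.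
Qed.

Lemma sqmod0 : sqmod (0 : C) = 0.
Proof. by rewrite /sqmod !expr2 /= mulr0 addr0. Qed.

Lemma normX_le1 (z : C) n : `|z| <= 1 -> `|z ^+ n| <= 1.
Proof. by move=> h; rewrite normrX exprn_ile1. Qed.

End S.

Theorem corollary2p3 (R : realType) (zeta : (R[i])^o) (f : (R[i])^o -> (R[i])^o)
    (a : nat -> (R[i])^o) :
  `|zeta| <= 1 ->
  in_Dzeta zeta f ->
  (forall z : (R[i])^o, `|z| < 1 -> series (fun k => a k * z ^+ k) @ \oo --> f z) ->
  cvg (series (fun k => a k * zeta ^+ k) @ \oo) /\
  (fun n => Dzeta zeta (fun z => f z - fn a zeta n z)) @ \oo --> 0%E.
Proof.
move=> Hz [c [b [Hb Hrep]]] Ha.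
have b0 := H2_to0 Hb.
have bb0 : bb c b @ \oo --> 0 by rewrite -cvg_shiftS.
have Hap : forall z : (R[i])^o, `|z| < 1 ->
    series (fun k => ap c zeta b k * z ^+ k) @ \oo --> f z.
  move=> z z1; have [w [Hw ->]] := Hrep z z1.
  have -> : series (fun k => ap c zeta b k * z ^+ k) = fun n =>
      c + (z - zeta) * series (fun k => b k * z ^+ k) n - bb c b n * z ^+ n.
    apply/funext => n; rewrite /series /= !big_mkord -P1 addrK //.
  rewrite -[X in _ --> X]subr0; apply: cvgB.
    apply: cvgD; first exact: cvg_cst.
    exact: (cvgM (cvg_cst _) Hw).
  by apply: mul_bnd0 => // n; apply: normX_le1; rewrite ltW.
have ea : a = ap c zeta b.
  apply/funext => k; apply/eqP; rewrite -subr_eq0; apply/eqP; move: k.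
  apply: uniq0 => z z1.
  have -> : series (fun k => (a k - ap c zeta b k) * z ^+ k) = fun n =>
      series (fun k => a k * z ^+ k) n - series (fun k => ap c zeta b k * z ^+ k) n.
    apply/funext => n; rewrite /series /= -sumrB.
    by apply: eq_bigr => k _; rewrite mulrBl.
  have := cvgB (Ha z z1) (Hap z z1); rewrite subrr => h; exact: h.
subst a.
have Hconv : forall n, series (fun j => ap c zeta b (n + j) * zeta ^+ j) @ \oo --> bb c b n.
  move=> n.
  have hb : (fun M => b (M + n)%N * zeta ^+ M.+1) @ \oo --> 0.
    apply: mul_bnd0; first by rewrite (cvg_shiftn n (fun k => b k)).
    by move=> M; apply: normX_le1.
  have H1 : (fun M => bb c b n - b (M + n)%N * zeta ^+ M.+1) @ \oo --> bb c b n - 0.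
    exact: cvgB (cvg_cst _) hb.
  rewrite subr0 in H1.
  rewrite -cvg_shiftS.
  have -> : [sequence series (fun j => ap c zeta b (n + j) * zeta ^+ j) n0.+1]_n0 =
      fun M => bb c b n - b (M + n)%N * zeta ^+ M.+1.
    by apply/funext => M; rewrite /series /= big_mkord P2.
  exact: H1.
have E0 : (fun j => ap c zeta b (0 + j) * zeta ^+ j) = (fun k => ap c zeta b k * zeta ^+ k).
  by apply/funext => j; rewrite add0n.
split.
  apply/cvg_ex; exists (bb c b 0); rewrite -E0; exact: Hconv.
have Ht : forall n, tailsum (ap c zeta b) zeta n = bb c b n.
  move=> n; rewrite /tailsum; exact: cvg_lim (Hconv n).
apply: (@squeeze_cvge _ _ _ _ (cst 0%E) _ (fun n => \sum_(n <= k <oo) (sqmod (b k))%:E)%E); last first.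
- exact: tail_cvg0 Hb.
- exact: cvg_cst.
apply: nearW => n; apply/andP; split.
  apply: le_ereal_inf_tmp => y [b' _ <-]; apply: nneseries_ge0 => k _ _.
  by rewrite lee_fin sqmod_ge0.
set b' := fun k => if (k < n)%N then 0 else b k.
apply: ge_ereal_inf; exists (\sum_(0 <= k <oo) (sqmod (b' k))%:E)%E.
  exists b' => //; exists 0; split.
    rewrite /H2coef; apply: le_lt_trans Hb; apply: lee_nneseries => k _.
      by rewrite lee_fin sqmod_ge0.
    by rewrite /b'; case: (k < n)%N; rewrite lee_fin ?sqmod0 ?sqmod_ge0.
  move=> z z1; have [w [Hw Hfz]] := Hrep z z1.
  exists (w - \sum_(k < n) b k * z ^+ k); split.
    have H1 : (fun N => series (fun k => b k * z ^+ k) N - \sum_(k < n) b k * z ^+ k) @ \oo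
        --> w - \sum_(k < n) b k * z ^+ k.
      exact: cvgB Hw (cvg_cst _).
    have E : {near \oo, (fun N => series (fun k => b k * z ^+ k) N - \sum_(k < n) b k * z ^+ k)
        =1 series (fun k => b' k * z ^+ k)}.
      exists n => // N /= nN.
      rewrite /series /= (big_cat_nat (leq0n n) nN) /=.
      rewrite [X in _ = X](big_cat_nat (leq0n n) nN) /=.
      have e1 : \sum_(0 <= k < n) b' k * z ^+ k = 0.
        rewrite big_nat_cond big1 // => k /andP[/andP[_ kn] _].
        by rewrite /b' kn mul0r.
      have e2 : \sum_(n <= k < N) b' k * z ^+ k = \sum_(n <= k < N) b k * z ^+ k.
        apply: eq_big_nat => k /andP[nk _].
        by rewrite /b' ltnNge nk.
      by rewrite e1 e2 add0r big_mkord addrC addrK.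
    exact: cvg_trans (near_eq_cvg E) H1.
  by rewrite /fn Ht P1 Hfz; ring.
rewrite [leRHS]eseries_cond [leRHS]eseries_mkcond.
apply: lee_nneseries => [k _ _|k _]; first by rewrite lee_fin sqmod_ge0.
by rewrite /b' /=; case: ltnP => _; rewrite ?sqmod0.
Qed.
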